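(* Let $a$ be a nonnegative measurable function on $\mathbb{R}_+$ with $a\in L_{\infty,loc}([0,\infty))$, and let $b$ be a nonnegative measurable function on $\mathbb{R}_+^2$ such that for a.e. $y>0$, $\int_0^y x\, b(x,y)\,\mathrm{d}x = y$ and $b(x,y)=0$ for a.e. $x>y$. Assume there are $l\ge 0$ and $b_0\ge 0$ such that $n_0(x)=\int_0^x b(y,x)\,\mathrm{d}y\le b_0(1+x^l)$ for all $x\in\mathbb{R}_+$. Let $m\ge 1$ with $m\geq l$. If $f\ge 0$ and $f\in D(A_{0,m})$, then $$\|\mathcal{B}f\|_{[0,m]}=\int_0^\infty a(y)\big(n_m(y)+n_0(y)\big)f(y)\,\mathrm{d}y<\infty,$$ where $(\mathcal{B}f)(x)=\int_x^\infty a(y)b(x,y)f(y)\,\mathrm{d}y$.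
   Context: For $m\ge0$, $n_m(y)=\int_0^y b(x,y)x^m\,\mathrm{d}x$. $X_{0,m}=L_1(\mathbb{R}_+,(1+x^m)\,\mathrm{d}x)$ with norm $\|f\|_{[0,m]}=\int_0^\infty |f(x)|(1+x^m)\,\mathrm{d}x$. $D(A_{0,m})=\{f\in X_{0,m}: af\in X_{0,m}\}$. *)

(* Defs.v *)
From HB Require Import structures.
From mathcomp Require Import all_boot all_order all_algebra.
From mathcomp Require Import all_classical all_reals all_analysis.
Set Implicit Arguments. Unset Strict Implicit. Unset Printing Implicit Defensive.
Import Order.TTheory GRing.Theory Num.Theory.
Import numFieldNormedType.Exports.
Local Open Scope classical_set_scope.
Local Open Scope ring_scope.
Local Open Scope ereal_scope.

(* R_+ is taken as [0, +oo); all integrals are Lebesgue integrals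
   (extended-real valued) w.r.t. Lebesgue measure on R. *)
Section Defs.
Variable R : realType.
Notation mu := (@lebesgue_measure R).

Definition nmom (b : R -> R -> R) (m : R) (y : R) : \bar R :=
  \int[mu]_(x in `[0%R, y]) (b x y * x `^ m)%:E.

Definition Bop (a : R -> R) (b : R -> R -> R) (f : R -> R) (x : R) : \bar R :=
  \int[mu]_(y in `]x, +oo[) (a y * b x y * f y)%:E.

Definition norm0m (m : R) (g : R -> \bar R) : \bar R :=
  \int[mu]_(x in `[0%R, +oo[) (`|g x| * (1 + x `^ m)%:E).

Definition inX0m (m : R) (f : R -> R) : Prop :=
  measurable_fun (`[0%R, +oo[ : set R) f /\ norm0m m (fun x => (f x)%:E) < +oo.

Definition inDA0m (a : R -> R) (m : R) (f : R -> R) : Prop :=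
  inX0m m f /\ inX0m m (fun x => (a x * f x)%R).
End Defs.

(* Main.v *)
Require Import Defs.
From HB Require Import structures.
From mathcomp Require Import all_boot all_order all_algebra.
From mathcomp Require Import all_classical all_reals all_analysis.
From mathcomp Require Import measurable_realfun.
From mathcomp Require Import ring lra.
Import Order.TTheory GRing.Theory Num.Theory.
Import numFieldNormedType.Exports.
Local Open Scope classical_set_scope.
Local Open Scope ring_scope.
Local Open Scope ereal_scope.

Section Aux.
Variable R : realType.
Notation mu := (@lebesgue_measure R).
Let D := (`[0%R, +oo[ : set R).

Lemma mD : measurable D.
Proof. exact: measurable_itv. Qed.

Lemma inD x : D x = (0 <= x)%R.
Proof. by rewrite /D /= in_itv /= andbT; apply/propext; split. Qed.

Lemma sec1 (b : R -> R -> R) y : (0 <= y)%R ->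
  measurable_fun (D `*` D) (fun p : R * R => b p.1 p.2) ->
  measurable_fun D (fun x => b x y).
Proof.
move=> y0 mb.
have -> : (fun x => b x y) = (fun p : R * R => b p.1 p.2) \o (pair^~ y) by [].
apply: (measurable_comp _ _ mb).
- by apply: measurableX; exact: mD.
- by move=> _ [x Dx <-]; split => //=; rewrite inD.
- exact: measurable_funTS.
Qed.

Lemma sec2 (b : R -> R -> R) x : (0 <= x)%R ->
  measurable_fun (D `*` D) (fun p : R * R => b p.1 p.2) ->
  measurable_fun D (fun y => b x y).
Proof.
move=> x0 mb.
have -> : (fun y => b x y) = (fun p : R * R => b p.1 p.2) \o (pair x) by [].
apply: (measurable_comp _ _ mb).
- by apply: measurableX; exact: mD.
- by move=> _ [y Dy <-]; split => //=; rewrite inD.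
- exact: measurable_funTS.
Qed.


Definition Eset : set (R * R) := [set p | (0 <= p.1)%R /\ (p.1 <= p.2)%R].

Lemma mEset : measurable Eset.
Proof.
have -> : Eset = (setT `&` fst @^-1` D) `&` (setT `&` (fun p : R * R => p.2 - p.1)%R @^-1` D).
  apply/seteqP; split => [p /= [h1 h2]|p /= [[_ h1] [_ h2]]].
    by rewrite !inD subr_ge0.
  by move: h1 h2; rewrite !inD subr_ge0.
apply: measurableI.
  by apply: measurable_fst => //; exact: mD.
have mB : measurable_fun setT (fun p : R * R => p.2 - p.1)%R.
  exact: (measurable_funD measurable_snd (measurable_funN measurable_fst)).
by apply: mB => //; exact: mD.
Qed.

Definition Gf (a : R -> R) (b : R -> R -> R) (f : R -> R) (m : R) :=
  (fun p : R * R => (a p.2 * b p.1 p.2 * f p.2 * (1 + p.1 `^ m))%:E) \_ Eset.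

Lemma mGf a b f m :
  measurable_fun D a -> measurable_fun D f ->
  measurable_fun (D `*` D) (fun p : R * R => b p.1 p.2) ->
  measurable_fun setT (Gf a b f m).
Proof.
move=> ma mf mb; apply/(measurable_restrictT _ mEset).
apply/measurable_EFinP.
have ES : Eset `<=` D `*` D.
  by move=> p [h1 h2]; split; rewrite inD //; apply: le_trans h2.
apply: (measurable_funS _ ES); first by apply: measurableX; exact: mD.
have mDD : measurable (D `*` D) by apply: measurableX; exact: mD.
apply: measurable_funM; [apply: measurable_funM; [apply: measurable_funM|]|].
- apply: (measurable_comp mD _ ma); first by move=> _ [p [_ ?] <-].
  exact: measurable_funTS.
- exact: mb.
- apply: (measurable_comp mD _ mf); first by move=> _ [p [_ ?] <-].
  exact: measurable_funTS.
- apply: measurable_funTS; apply: measurable_funD => //.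
  exact: (measurableT_comp (measurable_powR m) measurable_fst).
Qed.

Lemma Gf_ge0 a b f m : (forall x, (0 <= x)%R -> (0 <= a x)%R) ->
  (forall x y, (0 <= x)%R -> (0 <= y)%R -> (0 <= b x y)%R) ->
  (forall x, (0 <= x)%R -> (0 <= f x)%R) -> forall p, 0 <= Gf a b f m p.
Proof.
move=> a0 b0 f0 [x y]; rewrite /Gf patchE; case: ifP => // /set_mem [/= x0 xy].
have y0 : (0 <= y)%R by apply: le_trans xy.
rewrite lee_fin; apply: mulr_ge0; last by apply: addr_ge0 => //; exact: powR_ge0.
by rewrite !mulr_ge0 ?a0 ?b0 ?f0.
Qed.


Lemma mABF (a : R -> R) (b : R -> R -> R) (f : R -> R) x : (0 <= x)%R ->
  measurable_fun D a -> measurable_fun D f ->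
  measurable_fun (D `*` D) (fun p : R * R => b p.1 p.2) ->
  measurable_fun D (fun y => (a y * b x y * f y)%:E).
Proof.
move=> x0 ma mf mb; apply/measurable_EFinP.
apply: measurable_funM => //; apply: measurable_funM => //.
exact: sec2.
Qed.

Lemma mBX (b : R -> R -> R) (y r : R) : (0 <= y)%R ->
  measurable_fun (D `*` D) (fun p : R * R => b p.1 p.2) ->
  measurable_fun (`[0%R, y]%classic : set R) (fun x => (b x y * x `^ r)%:E).
Proof.
move=> y0 mb; apply/measurable_EFinP.
have SD : `[0%R, y] `<=` D.
  by move=> x; rewrite inD /= in_itv /= => /andP[].
apply: measurable_funM.
  exact: (measurable_funS mD SD (@sec1 b y y0 mb)).
exact: measurable_funTS (measurable_powR r).
Qed.

End Aux.

Theorem lemma2p1 (R : realType) (a : R -> R) (b : R -> R -> R) (l b0 m : R)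
  (f : R -> R) :
  measurable_fun (`[0%R, +oo[ : set R) a ->
  (forall x, (0 <= x)%R -> (0 <= a x)%R) ->
  (forall K : R, (0 < K)%R -> exists C : R,
     {ae (@lebesgue_measure R), forall x, `[0%R, K]%classic x -> (`|a x| <= C)%R}) ->
  measurable_fun ((`[0%R, +oo[ : set R) `*` (`[0%R, +oo[ : set R)) (fun p : R * R => b p.1 p.2) ->
  (forall x y, (0 <= x)%R -> (0 <= y)%R -> (0 <= b x y)%R) ->
  {ae (@lebesgue_measure R), forall y, (0 < y)%R ->
     \int[@lebesgue_measure R]_(x in `[0%R, y]) (x * b x y)%:E = y%:E /\
     {ae (@lebesgue_measure R), forall x, (y < x)%R -> b x y = 0%R}} ->
  (0 <= l)%R -> (0 <= b0)%R ->
  (forall x, (0 <= x)%R -> nmom b 0 x <= (b0 * (1 + x `^ l))%:E) ->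
  (1 <= m)%R -> (l <= m)%R ->
  (forall x, (0 <= x)%R -> (0 <= f x)%R) ->
  inDA0m a m f ->
  norm0m m (Bop a b f) =
    \int[@lebesgue_measure R]_(y in `[0%R, +oo[)
       ((a y)%:E * (nmom b m y + nmom b 0 y) * (f y)%:E)
  /\ norm0m m (Bop a b f) < +oo.
Proof.
move=> ma a0 aloc mb b0' hb l0 b00 hn0 m1 lm f0 [[mf _] [maf afin]].
pose G := @Gf R a b f m.
have mG : measurable_fun setT G := @mGf R a b f m ma mf mb.
have G0 : forall p, 0 <= G p := @Gf_ge0 R a b f m a0 b0' f0.
have hL : norm0m m (Bop a b f) = \int[lebesgue_measure]_x \int[lebesgue_measure]_y G (x, y).
  rewrite /norm0m integral_mkcond; apply: eq_integral => x _.
  rewrite patchE; case: ifPn => [/set_mem|/negP xD].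
    rewrite /= in_itv /= andbT => x0.
    have mF : measurable_fun (`[0%R, +oo[ : set R) (fun y => (a y * b x y * f y)%:E).
      exact: mABF.
    have Fge0 : forall y, (x <= y)%R -> 0 <= (a y * b x y * f y)%:E.
      move=> y xy; have y0 : (0 <= y)%R by apply: le_trans xy.
      by rewrite lee_fin !mulr_ge0 ?a0 ?b0' ?f0.
    have mF1 : measurable_fun (`[x, +oo[ : set R) (fun y => (a y * b x y * f y)%:E).
      apply: (measurable_funS (mD R) _ mF).
      by move=> y; rewrite inD /= in_itv /= andbT => /(le_trans x0).
    have mF2 : measurable_fun (`]x, +oo[ : set R) (fun y => (a y * b x y * f y)%:E).
      apply: (measurable_funS (mD R) _ mF).
      by move=> y; rewrite inD /= in_itv /= andbT => /ltW /(le_trans x0).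
    have Bge0 : 0 <= Bop a b f x.
      apply: integral_ge0 => y; rewrite /= in_itv /= andbT => /ltW.
      exact: Fge0.
    rewrite gee0_abs // /Bop integral_itv_obnd_cbnd //.
    rewrite -ge0_integralZr //; last 2 first.
      by move=> y; rewrite /= in_itv /= andbT; exact: Fge0.
      by rewrite lee_fin addr_ge0 // powR_ge0.
    rewrite integral_mkcond; apply: eq_integral => y _.
    rewrite /G /Gf !patchE.
    have [xy|xy] := boolP (x <= y)%R.
      rewrite mem_set; last by rewrite /= in_itv /= xy.
      by rewrite mem_set //= -EFinM.
    rewrite memNset; last by rewrite /= in_itv /= andbT; exact/negP.
    by rewrite memNset // => -[_ /= xy2]; move/negP: xy.
  apply/esym/integral0_eq => y _; rewrite /G /Gf patchE memNset // => -[x0 _].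
  by apply: xD; rewrite inE /= in_itv /= andbT.
have hpt : forall y, (0 <= y)%R ->
    (a y)%:E * (nmom b m y + nmom b 0 y) * (f y)%:E =
    \int[lebesgue_measure]_x G (x, y).
  move=> y y0.
  have mS : measurable (`[0%R, y]%classic : set R) by exact: measurable_itv.
  have bge0 : forall r x : R, (`[0%R, y]%classic : set R) x -> 0 <= (b x y * x `^ r)%:E.
    move=> r x; rewrite /= in_itv /= => /andP[x0 _].
    by rewrite lee_fin mulr_ge0 ?b0' ?powR_ge0.
  have mBm := @mBX R b y m y0 mb; have mB0 := @mBX R b y 0 y0 mb.
  have bgm := bge0 m; have bg0 := bge0 0%R.
  rewrite /nmom -ge0_integralD //.
  rewrite -muleA (muleC _ (f y)%:E) muleA -EFinM -ge0_integralZl_EFin //; last 3 first.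
    by move=> x Sx; rewrite adde_ge0 // bge0.
    by apply: emeasurable_funD.
    by rewrite mulr_ge0 ?a0 ?f0.
  rewrite integral_mkcond; apply: eq_integral => x _.
  rewrite /G /Gf !patchE.
  have [xS|xS] := boolP (x \in (`[0%R, y]%classic : set R)).
    rewrite mem_set; last first.
      by move: xS; rewrite inE /= in_itv /= => /andP[].
    by rewrite -EFinD -!EFinM powRr0; congr EFin; ring.
  rewrite memNset //; move=> [x0 xy]; move/negP: xS; apply.
  by rewrite inE /= in_itv /= x0 xy.
have hR : \int[lebesgue_measure]_(y in `[0%R, +oo[)
       ((a y)%:E * (nmom b m y + nmom b 0 y) * (f y)%:E) =
    \int[lebesgue_measure]_y \int[lebesgue_measure]_x G (x, y).
  rewrite integral_mkcond; apply: eq_integral => y _.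
  rewrite patchE; case: ifPn => [/set_mem|/negP yD].
    by rewrite /= in_itv /= andbT => y0; rewrite hpt.
  apply/esym/integral0_eq => x _; rewrite /G /Gf patchE memNset // => -[x0 xy].
  by apply: yD; rewrite inE /= in_itv /= andbT (le_trans x0 xy).
have hE : norm0m m (Bop a b f) =
    \int[lebesgue_measure]_(y in `[0%R, +oo[)
       ((a y)%:E * (nmom b m y + nmom b 0 y) * (f y)%:E).
  by rewrite hL hR; apply: fubini_tonelli.
split => //.
rewrite hE.
have m0 : (0 < m)%R by apply: lt_le_trans m1.
pose K := (2 * b0 + 1)%R.
have K0 : (0 <= K)%R by rewrite /K; lra.
have -> : \int[lebesgue_measure]_(y in `[0%R, +oo[)
       ((a y)%:E * (nmom b m y + nmom b 0 y) * (f y)%:E) =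
    \int[lebesgue_measure]_(y in `[0%R, +oo[) \int[lebesgue_measure]_x G (x, y).
  by apply: eq_integral => y; rewrite inE /= in_itv /= andbT => y0; exact: hpt.
apply: (@le_lt_trans _ _ (\int[lebesgue_measure]_(y in `[0%R, +oo[)
    (K%:E * (a y * f y * (1 + y `^ m))%:E))).
  apply: ae_ge0_le_integral => //.
  - by move=> y _; apply: integral_ge0 => x _.
  - apply: measurable_funTS.
    exact: (@measurable_fun_fubini_tonelli_G _ _ _ _ _ lebesgue_measure G mG G0).
  - move=> y; rewrite /= in_itv /= andbT => y0.
    by rewrite -EFinM lee_fin mulr_ge0 // !mulr_ge0 ?a0 ?f0 // addr_ge0 // powR_ge0.
  - apply/measurable_EFinP; apply: measurable_funM => //.
    apply: measurable_funM => //.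
    apply: measurable_funTS; apply: measurable_funD => //.
  apply: (filterS _ hb); first exact: (ae_filter_ringOfSetsType lebesgue_measure).
  move=> y hy.
  rewrite /= in_itv /= andbT => y0; rewrite -hpt //.
  move: y0; rewrite le_eqVlt => /predU1P[<-|ypos].
    rewrite /nmom set_itv1 !integral_set1 adde0 mule0 mul0e.
    by rewrite lee_fin mulr_ge0 // !mulr_ge0 ?a0 ?f0 // addr_ge0 // powR_ge0.
  have [hint _] := hy ypos.
  have y0 : (0 <= y)%R by apply: ltW.
  have mbS : measurable_fun (`[0%R, y]%classic : set R) (fun x => b x y).
    apply: (measurable_funS (mD R) _ (@sec1 R b y y0 mb)).
    by move=> x; rewrite inD /= in_itv /= => /andP[].
  have hm : nmom b m y <= (y `^ m)%:E.
    rewrite /nmom.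
    apply: (@le_trans _ _ (\int[lebesgue_measure]_(x in `[0%R, y])
        ((y `^ (m - 1))%:E * (x * b x y)%:E))).
      apply: ge0_le_integral => //.
      - move=> x; rewrite /= in_itv /= => /andP[x0 _].
        by rewrite lee_fin mulr_ge0 ?b0' ?powR_ge0.
      - exact: mBX.
      - apply: emeasurable_funM => //.
        apply/measurable_EFinP; apply: measurable_funM => //.
      - move=> x; rewrite /= in_itv /= => /andP[x0 xy].
        rewrite -EFinM lee_fin -[(x `^ m)%R](mulr_powRB1 x0 m0).
        have hp : (x `^ (m - 1) <= y `^ (m - 1))%R.
          apply: ge0_ler_powR => //; first by rewrite subr_ge0.
        have bx0 : (0 <= b x y)%R by apply: b0'.
        have px0 : (0 <= x `^ (m - 1))%R by apply: powR_ge0.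
        have h := ler_wpM2l (mulr_ge0 x0 bx0) hp.
        rewrite (_ : b x y * (x * x `^ (m - 1)) = (x * b x y) * x `^ (m - 1))%R; last by ring.
        by rewrite [X in (_ <= X)%R]mulrC.
    rewrite ge0_integralZl_EFin //; last 3 first.
      - move=> x; rewrite /= in_itv /= => /andP[x0 _].
        by rewrite lee_fin mulr_ge0 ?b0'.
      - apply/measurable_EFinP; apply: measurable_funM => //.
      - exact: powR_ge0.
    by rewrite hint -EFinM mulrC mulr_powRB1.
  have h0 := hn0 y y0.
  apply: (@le_trans _ _ ((a y)%:E * ((y `^ m)%:E + (b0 * (1 + y `^ l))%:E) * (f y)%:E)).
    apply: lee_wpmul2r; first by rewrite lee_fin f0.
    apply: lee_wpmul2l; first by rewrite lee_fin a0.
    exact: leeD.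
  rewrite -EFinD -!EFinM lee_fin.
  have hl : (y `^ l <= 1 + y `^ m)%R.
    have [y1|y1] := leP y 1%R.
      have : (y `^ l <= 1 `^ l)%R.
        by apply: ge0_ler_powR => //; rewrite nnegrE.
      rewrite powR1 => h; apply: (le_trans h).
      by rewrite lerDl powR_ge0.
    apply: (@le_trans _ _ (y `^ m)%R); last by rewrite lerDr.
    by apply: ler_powR => //; apply: ltW.
  have A0 : (0 <= a y * f y)%R by rewrite mulr_ge0 ?a0 ?f0.
  have P0 : (0 <= y `^ m)%R by apply: powR_ge0.
  have hl2 : (0 <= 1 + y `^ m - y `^ l)%R by rewrite subr_ge0.
  have h3 := mulr_ge0 (mulr_ge0 A0 b00) hl2.
  have h4 := mulr_ge0 (mulr_ge0 A0 b00) P0.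
  rewrite /K; nra.
rewrite ge0_integralZl_EFin //; last 2 first.
  - move=> y; rewrite /= in_itv /= andbT => y0.
    by rewrite lee_fin !mulr_ge0 ?a0 ?f0 // addr_ge0 // powR_ge0.
  - apply/measurable_EFinP; apply: measurable_funM => //.
    apply: measurable_funTS; apply: measurable_funD => //.
apply: lte_mul_pinfty; [by rewrite lee_fin|by []|].
rewrite (_ : \int[lebesgue_measure]_(y in `[0%R, +oo[) (a y * f y * (1 + y `^ m))%:E
   = norm0m m (fun x => (a x * f x)%:E)) //.
rewrite /norm0m; apply: eq_integral => y; rewrite inE /= in_itv /= andbT => y0.
by rewrite /= ger0_norm ?mulr_ge0 ?a0 ?f0 // -EFinM.
Qed.
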